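(* Fourier matrices $F$ and $G$ of the same size, with indexing groups $I_F$ and $I_G$, are permutation equivalent, i.e. $P_{\chi'}\,F\,P_{\chi''}^T=G$ for some bijections $\chi',\chi'':I_G\to I_F$, if and only if the groups $I_F$ and $I_G$ are isomorphic.
   Context: For $n\ge1$, $F_n$ is the $n\times n$ matrix with rows and columns indexed by $\mathbb Z_n$ and entries $e^{2\pi i\,\tilde i\tilde j/n}$. A Fourier matrix is $F=F_{N_1}\otimes\cdots\otimes F_{N_r}$ of size $N=N_1\cdots N_r$, indexed by $I_F=\mathbb Z_{N_1}\times\cdots\times\mathbb Z_{N_r}$ with $F_{i,j}=\prod_x(F_{N_x})_{i_x,j_x}$; group indices correspond to ordinary indices via lexicographic order of $I_F$. For a bijection $\varphi:I_G\to I_F$, $P_\varphi$ is the $N\times N$ permutation matrix (rows indexed by $I_G$, columns by $I_F$) with $(P_\varphi)_{i,\varphi(i)}=1$. *)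

(* Defs.v *)
From HB Require Import structures.
From mathcomp Require Import all_boot all_order all_algebra.
From mathcomp Require Import complex.
From mathcomp Require Import reals trigo.
Set Implicit Arguments. Unset Strict Implicit. Unset Printing Implicit Defensive.
Import Order.TTheory GRing.Theory Num.Theory.
Local Open Scope ring_scope.

(* The indexing group I_F = Z_{N_1} x ... x Z_{N_r} of the Fourier matrix
   F_{N_1} (x) ... (x) F_{N_r}, where Ns = [:: N_1; ...; N_r]. *)
Definition idx (Ns : seq nat) : finType :=
  {dffun forall x : 'I_(size Ns), 'I_(nth 1%N Ns x)}.

Lemma ord_gt0 (n : nat) (a : 'I_n) : (0 < n)%N.
Proof. by apply: leq_ltn_trans (leq0n a) (ltn_ord a). Qed.

Definition addZn (n : nat) (a b : 'I_n) : 'I_n :=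
  Ordinal (ltn_pmod (a + b)%N (ord_gt0 a)).

Definition idx_add (Ns : seq nat) (a b : idx Ns) : idx Ns :=
  finfun (fun x => addZn (a x) (b x)).

Definition group_iso (Ms Ns : seq nat) (phi : idx Ms -> idx Ns) : Prop :=
  bijective phi /\ forall a b, phi (idx_add a b) = idx_add (phi a) (phi b).

Definition groups_isomorphic (Ms Ns : seq nat) : Prop :=
  exists phi : idx Ms -> idx Ns, group_iso phi.

Definition e2pii (R : realType) (t : R) : R[i] :=
  Complex (cos (2 * pi * t)) (sin (2 * pi * t)).

(* Matrices with rows/columns indexed by finite types (the identification
   with ordinary N x N matrices via lexicographic order is immaterial for
   the statement, which quantifies over all bijections). *)
Definition fmat (R : Type) (I J : finType) := I -> J -> R.

Definition fmul (R : ringType) (I J K : finType)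
    (A : fmat R I J) (B : fmat R J K) : fmat R I K :=
  fun i k => \sum_(j : J) A i j * B j k.

Definition ftr (R : Type) (I J : finType) (A : fmat R I J) : fmat R J I :=
  fun j i => A i j.

Definition fourier (R : realType) (Ns : seq nat) : fmat R[i] (idx Ns) (idx Ns) :=
  fun i j => \prod_(x : 'I_(size Ns))
     e2pii (((i x : nat) * (j x : nat))%:R / (nth 1%N Ns x)%:R : R).

Definition permmat (R : ringType) (I J : finType) (phi : I -> J) : fmat R I J :=
  fun i j => (phi i == j)%:R.

Arguments fourier R Ns : clear implicits.
Arguments permmat R {I J} phi.

(* Main.v *)
Require Import Defs.
From HB Require Import structures.
From mathcomp Require Import all_boot all_order all_algebra.
From mathcomp Require Import complex.
From mathcomp Require Import reals trigo.
From mathcomp Require Import ring lra.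
From Stdlib Require Import FunctionalExtensionality.
Set Implicit Arguments. Unset Strict Implicit. Unset Printing Implicit Defensive.
Import Order.TTheory GRing.Theory Num.Theory.
Local Open Scope ring_scope.

Section Trig.
Variable R : realType.
Implicit Types s t u : R.

Lemma e2piiD s t : e2pii (s + t) = e2pii s * e2pii t.
Proof.
rewrite /e2pii mulrDr sinD cosD /GRing.mul /=.
by congr Complex; rewrite addrC.
Qed.

Lemma e2pii0 : e2pii (0 : R) = 1.
Proof. by rewrite /e2pii mulr0 cos0 sin0. Qed.

Lemma e2piiN t : e2pii t * e2pii (- t) = 1.
Proof. by rewrite -e2piiD subrr e2pii0. Qed.

Lemma e2pii_neq0 t : e2pii t != 0.
Proof.
apply/negP => /eqP H; have := e2piiN t; rewrite H mul0r => /eqP.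
by rewrite eq_sym oner_eq0.
Qed.

Lemma e2pii_nat (n : nat) : e2pii (n%:R : R) = 1.
Proof.
elim: n => [|n IH]; first exact: e2pii0.
rewrite -addn1 natrD e2piiD IH mul1r /e2pii mulr1.
have -> : 2 * pi = pi *+ 2 :> R by rewrite mulr_natl.
by rewrite cos2pi sin2pi.
Qed.

Lemma e2piiX t (n : nat) : e2pii t ^+ n = e2pii (n%:R * t).
Proof.
elim: n => [|n IH]; first by rewrite expr0 mul0r e2pii0.
by rewrite exprSr IH -e2piiD -addn1 natrD mulrDl mul1r.
Qed.

Lemma e2pii_eq1 u : -1 < u < 1 -> e2pii u = 1 -> u = 0.
Proof.
move=> /andP[u1 u2] [Hc Hs].
have H2 : 2 * pi * u = (pi * u) *+ 2 by rewrite -[RHS]mulr_natl mulrA.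
rewrite H2 cos_mulr2n in Hc.
have : `|cos (pi * u)| = 1.
  have : cos (pi * u) ^+ 2 = 1.
    move: Hc; set c := cos (pi * u) ^+ 2; move=> Hc; lra.
  move/eqP; rewrite sqrf_eq1 => /orP[] /eqP ->; by rewrite ?normrN normr1.
move/cos1sin0 => Hs0.
apply/eqP; apply/negPn/negP => u0.
have Hpos : 0 < pi * `|u| < pi.
  apply/andP; split; first by rewrite mulr_gt0 ?pi_gt0 ?normr_gt0.
  rewrite -[X in _ < X]mulr1 ltr_pM2l ?pi_gt0 //.
  by rewrite ltr_norml u1 u2.
have := sin_gt0_pi Hpos.
case: (ler0P u) => _; last by rewrite Hs0 ltxx.
by rewrite mulrN sinN Hs0 oppr0 ltxx.
Qed.

Lemma e2piiB s t : e2pii (s - t) = e2pii s * e2pii (- t).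
Proof. exact: e2piiD. Qed.

Lemma e2pii_inj (N c c' : nat) : (c < N)%N -> (c' < N)%N ->
  e2pii (c%:R / N%:R : R) = e2pii (c'%:R / N%:R) -> c = c'.
Proof.
move=> cN c'N H.
have N0 : (0 : R) < N%:R by rewrite ltr0n (leq_ltn_trans (leq0n c) cN).
have H1 : e2pii (c%:R / N%:R - c'%:R / N%:R : R) = 1.
  by rewrite e2piiB H e2piiN.
have a1 : c%:R / N%:R < (1 : R) by rewrite ltr_pdivrMr // mul1r ltr_nat.
have a2 : c'%:R / N%:R < (1 : R) by rewrite ltr_pdivrMr // mul1r ltr_nat.
have b1 : 0 <= c%:R / N%:R :> R by rewrite divr_ge0 ?ler0n.
have b2 : 0 <= c'%:R / N%:R :> R by rewrite divr_ge0 ?ler0n.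
have := e2pii_eq1 _ H1; rewrite (_ : _ < _ < _ = true); last first.
  by apply/andP; split; lra.
move=> /(_ erefl) /eqP; rewrite subr_eq0 => /eqP H2.
have : (c%:R : R) = c'%:R.
  by rewrite -[LHS](divfK (lt0r_neq0 N0)) H2 divfK ?lt0r_neq0.
by move/eqP; rewrite eqr_nat => /eqP.
Qed.

Lemma root_unity (N : nat) (z : R[i]) : (0 < N)%N -> z ^+ N = 1 ->
  exists c : 'I_N, z = e2pii (c%:R / N%:R).
Proof.
move=> N0 zN.
case: (boolP [exists c : 'I_N, z == e2pii (c%:R / N%:R)]).
  by move=> /existsP [c /eqP ->]; exists c.
rewrite negb_exists => /forallP Hn.
pose s := z :: [seq e2pii ((c : nat)%:R / N%:R : R) | c : 'I_N].
pose p : {poly R[i]} := 'X^N - 1%:P.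
have p0 : p != 0.
  by rewrite -size_poly_eq0 size_XnsubC.
have : (size s < size p)%N.
  apply: max_poly_roots => //.
    apply/allP => w; rewrite inE => /orP [/eqP ->|/mapP [c _ ->]];
      rewrite /root /p !hornerE ?zN ?subrr //.
    rewrite e2piiX mulrC divfK ?e2pii_nat ?subrr //.
    by rewrite pnatr_eq0 -lt0n.
  rewrite /s /= map_inj_uniq ?enum_uniq ?andbT.
    by apply/mapP => [[c _ /eqP]]; rewrite (negbTE (Hn c)).
  by move=> c c' /e2pii_inj H; apply: val_inj; apply: H.
by rewrite size_XnsubC //= size_map -cardE card_ord ltnn.
Qed.

Lemma e2piiBnat t (n : nat) : e2pii (t - n%:R) = e2pii t.
Proof. by rewrite e2piiB; have := e2piiN (n%:R : R); rewrite e2pii_nat mul1r => ->; rewrite mulr1. Qed.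

End Trig.

Section Group.
Variable R : realType.
Variable Ns : seq nat.
Hypothesis hN : forall k, (0 < nth 1%N Ns k)%N.

Local Notation N x := (nth 1%N Ns x).

Definition zero : idx Ns := finfun (fun y : 'I_(size Ns) => Ordinal (hN y)).

Definition single (x : 'I_(size Ns)) (m : nat) : idx Ns :=
  finfun (fun y : 'I_(size Ns) => Ordinal (ltn_pmod ((y == x) * m)%N (hN y))).

Definition dec (b : idx Ns) (x : 'I_(size Ns)) : idx Ns :=
  finfun (fun y : 'I_(size Ns) => Ordinal (leq_ltn_trans (leq_subr (y == x) (b y)) (ltn_ord (b y)))).

Lemma idx_addE (a b : idx Ns) y : (idx_add a b y : nat) = ((a y + b y) %% N y)%N.
Proof. by rewrite /idx_add ffunE. Qed.

Definition ischar (chi : idx Ns -> R[i]) :=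
  forall a b, chi (idx_add a b) = chi a * chi b.

Lemma single_add x m m' : idx_add (single x m) (single x m') = single x (m + m').
Proof.
apply/ffunP => y; apply: val_inj; rewrite /= idx_addE !ffunE /=.
by rewrite modnDm mulnDr.
Qed.

Lemma single0 x : single x 0 = zero.
Proof. by apply/ffunP => y; apply: val_inj; rewrite !ffunE /= muln0 mod0n. Qed.

Lemma singleN x : single x (N x) = zero.
Proof.
apply/ffunP => y; apply: val_inj; rewrite !ffunE /=.
by case: eqP => [->|_]; rewrite ?mul1n ?modnn ?mul0n ?mod0n.
Qed.

Lemma zero_add : idx_add zero zero = zero.
Proof. by apply/ffunP => y; apply: val_inj; rewrite /= idx_addE !ffunE /= mod0n. Qed.

Lemma char_zero chi : ischar chi -> (forall b, chi b != 0) -> chi zero = 1.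
Proof.
move=> Hc Hn; apply: (mulfI (Hn zero)).
by rewrite mulr1 -Hc zero_add.
Qed.

Lemma char_single chi x m : ischar chi -> (forall b, chi b != 0) ->
  chi (single x m) = chi (single x 1) ^+ m.
Proof.
move=> Hc Hn; elim: m => [|m IH]; first by rewrite single0 char_zero.
by rewrite exprSr -addn1 -single_add Hc IH.
Qed.

Lemma dec_add (b : idx Ns) (x : 'I_(size Ns)) : (0 < b x)%N -> idx_add (dec b x) (single x 1) = b.
Proof.
move=> bx; apply/ffunP => y; apply: val_inj; rewrite /= idx_addE !ffunE /=.
rewrite modnDmr; case: eqP => [->|_] /=.
  by rewrite muln1 subnK // modn_small.
by rewrite subn0 mul0n addn0 modn_small.
Qed.

Lemma sum_eqx (x : 'I_(size Ns)) : (\sum_(y < size Ns) (y == x) = 1)%N.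
Proof.
rewrite (bigD1 x) //= eqxx big1 ?addn0 // => y /negbTE -> //.
Qed.

Lemma dec_weight (b : idx Ns) (x : 'I_(size Ns)) : (0 < b x)%N ->
  (\sum_y (dec b x y : nat) + 1 = \sum_y (b y : nat))%N.
Proof.
move=> bx; transitivity (\sum_y (dec b x y : nat) + \sum_y ((y == x) : nat))%N.
  by rewrite sum_eqx.
rewrite -big_split /=; apply: eq_bigr => y _.
rewrite ffunE /= subnK //; case: eqP => [->|] //.
Qed.

Lemma prod_dec (z : 'I_(size Ns) -> R[i]) (b : idx Ns) x : (0 < b x)%N ->
  \prod_y z y ^+ (b y) = \prod_y z y ^+ (dec b x y) * z x.
Proof.
move=> bx.
transitivity (\prod_y (z y ^+ (dec b x y) * z y ^+ (y == x))).
  apply: eq_bigr => y _; rewrite -exprD ffunE /= subnK //.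
  by case: eqP => [->|].
rewrite big_split /=; congr (_ * _).
rewrite (bigD1 x) //= eqxx expr1 big1 ?mulr1 // => y /negbTE ->.
by rewrite expr0.
Qed.

Lemma char_prod chi : ischar chi -> (forall b, chi b != 0) ->
  forall b, chi b = \prod_x chi (single x 1) ^+ (b x).
Proof.
move=> Hc Hn.
suff: forall n (b : idx Ns), (\sum_y (b y : nat) <= n)%N ->
    chi b = \prod_x chi (single x 1) ^+ (b x).
  by move=> H b; apply: (H _ b (leqnn _)).
elim=> [|n IH] b Hb; case: (pickP (fun y => 0 < b y)%N) => [x bx|H0].
- by rewrite -(dec_weight bx) addn1 in Hb.
- have bz : b = zero.
    apply/ffunP => y; apply: val_inj; rewrite ffunE /=.
    by move: (H0 y) => /= /negbT; rewrite lt0n negbK => /eqP.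
  rewrite bz char_zero // big1 // => y _.
  by rewrite ffunE /= expr0.
- rewrite -{1}(dec_add bx) Hc IH; last by rewrite -ltnS -addn1 dec_weight.
  by rewrite (prod_dec _ bx).
- have bz : b = zero.
    apply/ffunP => y; apply: val_inj; rewrite ffunE /=.
    by move: (H0 y) => /= /negbT; rewrite lt0n negbK => /eqP.
  rewrite bz char_zero // big1 // => y _.
  by rewrite ffunE /= expr0.
Qed.

Lemma char_root chi (x : 'I_(size Ns)) : ischar chi -> (forall b, chi b != 0) ->
  chi (single x 1) ^+ (N x) = 1.
Proof. by move=> Hc Hn; rewrite -char_single // singleN char_zero. Qed.

Lemma duality chi : ischar chi -> (forall b, chi b != 0) ->
  exists c : idx Ns, forall b, chi b = fourier R Ns c b.
Proof.
move=> Hc Hn.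
have : forall x : 'I_(size Ns), exists c : 'I_(N x), chi (single x 1) = e2pii (c%:R / (N x)%:R).
  by move=> x; apply: root_unity (hN x) (char_root x Hc Hn).
case/fin_all_exists => cf Hcf; exists (finfun cf) => b.
rewrite char_prod // /fourier; apply: eq_bigr => x _.
rewrite Hcf e2piiX ffunE; congr e2pii.
by rewrite natrM mulrA; congr (_ * _); exact: mulrC.
Qed.

Lemma F_sym a b : fourier R Ns a b = fourier R Ns b a.
Proof. by rewrite /fourier; apply: eq_bigr => x _; rewrite mulnC. Qed.

Lemma F_char1 a a' b :
  fourier R Ns (idx_add a a') b = fourier R Ns a b * fourier R Ns a' b.
Proof.
rewrite /fourier -big_split; apply: eq_bigr => x _ /=; rewrite idx_addE -e2piiD.
set r := ((a x + a' x) %% N x)%N; set q := ((a x + a' x) %/ N x)%N.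
have E := divn_eq (a x + a' x) (N x); rewrite -/q -/r in E.
have Nz : (N x)%:R != 0 :> R by rewrite pnatr_eq0 -lt0n hN.
have Er : (r%:R : R) = (a x)%:R + (a' x)%:R - q%:R * (N x)%:R.
  by rewrite -natrD E natrD natrM addrC addKr.
have -> : ((r * b x)%:R / (N x)%:R : R) =
   ((a x * b x)%:R / (N x)%:R + (a' x * b x)%:R / (N x)%:R) - (q * b x)%:R.
  rewrite !natrM Er; field; exact: Nz.
exact: e2piiBnat.
Qed.

Lemma F_neq0 a b : fourier R Ns a b != 0.
Proof.
rewrite /fourier; apply: (big_ind (fun z => z != 0)) => //.
- exact: oner_neq0.
- by move=> u v; exact: mulf_neq0.
- by move=> x _; exact: e2pii_neq0.
Qed.

Lemma F_single a (x : 'I_(size Ns)) m : fourier R Ns a (single x m) =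
  e2pii (((a x) * (m %% N x))%:R / (N x)%:R).
Proof.
rewrite /fourier (bigD1 x) //= big1 ?mulr1; first by rewrite ffunE eqxx mul1n.
by move=> y /negbTE yx; rewrite ffunE /= yx mul0n mod0n muln0 mul0r e2pii0.
Qed.

Lemma F_rowinj a a' : (forall b, fourier R Ns a b = fourier R Ns a' b) -> a = a'.
Proof.
move=> H; apply/ffunP => x; apply: val_inj.
have := H (single x 1); rewrite !F_single.
case: (ltnP 1 (N x)) => [N1|N1].
  by rewrite modn_small // !muln1 => /e2pii_inj; apply; exact: ltn_ord.
move=> _; have h1 := leq_trans (ltn_ord (a x)) N1.
have h2 := leq_trans (ltn_ord (a' x)) N1.
by move: h1 h2; rewrite /= !ltnS !leqn0 => /eqP -> /eqP ->.
Qed.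

End Group.

Lemma pos_nth (Ns : seq nat) : all (fun n => 0 < n)%N Ns -> forall k, (0 < nth 1%N Ns k)%N.
Proof.
elim: Ns => [|n s IH] /= H k; first by rewrite nth_nil.
case/andP: H => Hn Hs; case: k => [|k] //=; exact: IH.
Qed.

Lemma fmul_perm (R : realType) (I J : finType) (chi1 chi2 : I -> J)
  (F : fmat R[i] J J) i k :
  fmul (fmul (permmat R[i] chi1) F) (ftr (permmat R[i] chi2)) i k = F (chi1 i) (chi2 k).
Proof.
rewrite /fmul /ftr /permmat.
have inner : forall l, \sum_j (chi1 i == j)%:R * F j l = F (chi1 i) l.
  move=> l; rewrite (bigD1 (chi1 i)) //= (eq_refl (chi1 i)) mul1r big1 ?addr0 //.
  by move=> j /negbTE; rewrite eq_sym => ->; rewrite mul0r.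
rewrite (eq_bigr (fun l => F (chi1 i) l * (chi2 k == l)%:R)); last first.
  by move=> l _; rewrite inner.
rewrite (bigD1 (chi2 k)) //= (eq_refl (chi2 k)) mulr1 big1 ?addr0 //.
by move=> l /negbTE; rewrite eq_sym => ->; rewrite mulr0.
Qed.

Unset Implicit Arguments.

Theorem corollary4p5 (R : realType) (Ns Ms : seq nat)
  (HNs : all (fun n => 0 < n)%N Ns) (HMs : all (fun n => 0 < n)%N Ms)
  (Hsize : (\prod_(n <- Ns) n)%N = (\prod_(n <- Ms) n)%N) :
  (exists chi1 chi2 : idx Ms -> idx Ns,
      bijective chi1 /\ bijective chi2 /\
      fmul (fmul (permmat R[i] chi1) (fourier R Ns)) (ftr (permmat R[i] chi2))
      = fourier R Ms)
  <-> groups_isomorphic Ms Ns.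
Proof.
have hN := pos_nth HNs; have hM := pos_nth HMs.
split.
- case=> chi1 [chi2 [b1 [b2 E]]].
  have H : forall i k, fourier R Ns (chi1 i) (chi2 k) = fourier R Ms i k.
    by move=> i k; rewrite -E fmul_perm.
  exists chi1; split => // i i'.
  apply: (@F_rowinj R Ns hN) => b.
  case: b2 => g2 _ c2.
  by rewrite -(c2 b) H (@F_char1 R Ns hN) !H (@F_char1 R Ms hM).
- case=> phi [[g c1 c2] hom].
  have ghom : forall a b, g (idx_add a b) = idx_add (g a) (g b).
    by move=> a b; apply: (can_inj c1); rewrite hom !c2.
  have Hch : forall i, exists c, forall b,
      fourier R Ms i (g b) = fourier R Ns c b.
    move=> i; apply: (@duality R Ns hN (fun b => fourier R Ms i (g b))).
    + move=> a b /=.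
      by rewrite ghom !(@F_sym R Ms i) (@F_char1 R Ms hM).
    + by move=> b; exact: F_neq0.
  case/fin_all_exists: Hch => chi1 Hchi1.
  have inj1 : injective chi1.
    move=> i i' Ei; apply: (@F_rowinj R Ms hM) => k.
    by rewrite -(c1 k) Hchi1 Ei -Hchi1.
  exists chi1, phi; split.
    apply: inj_card_bij => //.
    by rewrite (bij_eq_card (Bijective c1 c2)).
  split; first exact: (Bijective c1 c2).
  apply: functional_extensionality => i; apply: functional_extensionality => k.
  by rewrite fmul_perm -Hchi1 c1.
Qed.
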